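(* If $(A,W)$ is a Pratt comonoid, then $W$ is closed under forming unions of pairwise disjoint families (of arbitrary cardinality) of its members.
   Context: A Pratt comonoid is a pair $(A,W)$ where $A$ is a set and $W$ is a set of subsets of $A$ such that (i) $\emptyset\in W$ and $A\in W$; (ii) whenever $C\subseteq A\times A$ is such that for every $a\in A$ both the $a$-th row $\{b\mid (a,b)\in C\}$ and the $a$-th column $\{b\mid (b,a)\in C\}$ belong to $W$ (a crossword over $W$), the diagonal $\{b\mid (b,b)\in C\}$ also belongs to $W$. *)

(* Defs.v *)
Definition subset_of (A : Type) := A -> Prop.

Definition crossword {A : Type} (W : subset_of A -> Prop) (C : A -> A -> Prop) : Prop :=
  forall a : A, W (fun b => C a b) /\ W (fun b => C b a).

Definition diagonal {A : Type} (C : A -> A -> Prop) : subset_of A := fun b => C b b.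

Definition empty_set {A : Type} : subset_of A := fun _ => False.
Definition full_set {A : Type} : subset_of A := fun _ => True.

Definition pratt_comonoid (A : Type) (W : subset_of A -> Prop) : Prop :=
  W empty_set /\ W full_set /\
  (forall C : A -> A -> Prop, crossword W C -> W (diagonal C)).

Definition big_union {A I : Type} (F : I -> subset_of A) : subset_of A :=
  fun a => exists i : I, F i a.

Definition pairwise_disjoint {A I : Type} (F : I -> subset_of A) : Prop :=
  forall i j : I, i <> j -> forall a : A, F i a -> F j a -> False.

(* Main.v *)
Require Import Defs.
From Stdlib Require Import Classical FunctionalExtensionality PropExtensionality.

Lemma row_in (A I : Type) (W : subset_of A -> Prop) (F : I -> subset_of A) :
  W empty_set -> (forall i, W (F i)) -> pairwise_disjoint F ->
  forall a, W (fun b => exists i, F i a /\ F i b).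
Proof.
  intros H0 HF Hd a.
  destruct (classic (exists i, F i a)) as [[i0 Hi0]|Hn].
  - replace (fun b => exists i, F i a /\ F i b) with (F i0); [apply HF|].
    apply functional_extensionality; intro b; apply propositional_extensionality.
    split.
    + intro Hb; exists i0; auto.
    + intros [j [Hja Hjb]].
      destruct (classic (j = i0)) as [->|Hne]; [exact Hjb|].
      exfalso; exact (Hd j i0 Hne a Hja Hi0).
  - replace (fun b => exists i, F i a /\ F i b) with (@empty_set A); [exact H0|].
    apply functional_extensionality; intro b; apply propositional_extensionality.
    split; [intros []|].
    intros [j [Hja _]]; apply Hn; exists j; exact Hja.
Qed.

Theorem corollary4p2 (A : Type) (W : subset_of A -> Prop) :
  pratt_comonoid A W ->
  forall (I : Type) (F : I -> subset_of A),
    (forall i : I, W (F i)) ->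
    pairwise_disjoint F ->
    W (big_union F).
Proof.
  intros [H0 [_ HC]] I F HF Hd.
  pose (C := fun a b => exists i, F i a /\ F i b).
  assert (Hcw : crossword W C).
  { intro a; split.
    - exact (row_in A I W F H0 HF Hd a).
    - replace (fun b => C b a) with (fun b => exists i, F i a /\ F i b).
      + exact (row_in A I W F H0 HF Hd a).
      + apply functional_extensionality; intro b; apply propositional_extensionality.
        unfold C; split; intros [i [x y]]; exists i; auto. }
  replace (big_union F) with (diagonal C); [exact (HC C Hcw)|].
  apply functional_extensionality; intro b; apply propositional_extensionality.
  unfold diagonal, C, big_union; split.
  - intros [i [x _]]; exists i; exact x.
  - intros [i x]; exists i; auto.
Qed.
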